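(* Let $n\ge1$, $\gamma>1$, $V_0>0$, $\rho\in(0,1/n)$, $\theta>1$, $t\in[0,n]$, $\vartheta\in(0,1)$, original qualities $\alpha_1>\dots>\alpha_n>0$, and let $h:[0,1]\to[1,\infty)$ be differentiable, increasing and concave with $h(0)=1$, $h(1)=\bar h>1$. Assume $n\frac{\gamma-1}{\gamma}<1$, $\bar h^{1/\gamma}>\frac1{1-n\rho}$, and $\frac{h'(x)}{\gamma h(x)}>\frac{n\rho}{1-n\rho x}$ for all $x\in[0,1]$. Let $V^*=\frac{\gamma-1}{n-(n-1)\gamma}V_0$. Consider the simultaneous game in which each seller $i$ chooses $x_i\in[0,1]$ to maximize $$\pi_i^p(x_i,x_{-i})=\frac{\gamma-1}{\gamma}\Big(\frac{\alpha_i h(x_i)}{V^*}\Big)^{1/\gamma}\Big[1-\rho\sum_{j=1}^n x_j\Big]\Big(1-\vartheta-\theta\frac{t}{n}x_i\Big).$$ Define $\tau_1=\frac{h'(0)}{\gamma}-\rho$ and $\tau_2=\Big[1+\Big(\frac{h'(1)}{\gamma\bar h}-\frac{\rho}{1-n\rho}\Big)^{-1}\Big]^{-1}$. Then $\tau_1>\tau_2>0$, and the sellers' equilibrium adulteration decisions are symmetric, $x_i^*=x^*$ for all $i$, where: (1) if $\theta\frac{t}{n}\ge\tau_1(1-\vartheta)$, then $x^*=0$; (2) if $\theta\frac{t}{n}\le\tau_2(1-\vartheta)$, then $x^*=1$; (3) otherwise $x^*=\hat x$, where $\hat x\in(0,1)$ is determined by the equation $$\Big(\frac{h'(x)}{\gamma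 h(x)}-\frac{\rho}{1-n\rho x}\Big)\Big(1-\vartheta-\theta\frac{t}{n}x\Big)=\theta\frac{t}{n}.$$
   Context: $\pi_i^p$ is seller $i$'s expected profit on an e-commerce platform under preemptive economically motivated adulteration (adulteration chosen before the common quality uncertainty is realized), after substituting equilibrium prices. $x_i$ is the amount of adulterant, $h$ the quality improvement it produces, $\rho$ consumers' quality consciousness, $\gamma$ price sensitivity, $V_0$ the outside option's quality-price ratio, $\vartheta$ the platform's take rate, $t$ the number of randomly inspected sellers, and $\theta$ the penalty intensity; $\theta t/n$ is the ''overall penalty risk''. *)

(* Defs.v *)
From Stdlib Require Import Reals Lra Lia List.
From Coquelicot Require Import Coquelicot.
Open Scope R_scope.

(* sum_{j=0}^{n-1} f j  (sellers are indexed 0..n-1) *)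
Definition sumR (n : nat) (f : nat -> R) : R :=
  fold_right Rplus 0 (map f (seq 0 n)).

Definition Vstar (n : nat) (gamma V0 : R) : R :=
  (gamma - 1) / (INR n - (INR n - 1) * gamma) * V0.

Definition risk (n : nat) (theta t : R) : R := theta * t / INR n.

Definition profit (n : nat) (gamma V0 rho theta t vt : R)
  (alpha : nat -> R) (h : R -> R) (x : nat -> R) (i : nat) : R :=
  (gamma - 1) / gamma
  * Rpower (alpha i * h (x i) / Vstar n gamma V0) (1 / gamma)
  * (1 - rho * sumR n x)
  * (1 - vt - risk n theta t * x i).

Definition upd (x : nat -> R) (i : nat) (y : R) : nat -> R :=
  fun j => if Nat.eqb j i then y else x j.

Definition is_equilibrium (n : nat) (gamma V0 rho theta t vt : R)
  (alpha : nat -> R) (h : R -> R) (x : nat -> R) : Prop :=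
  (forall i, (i < n)%nat -> 0 <= x i <= 1) /\
  (forall i y, (i < n)%nat -> 0 <= y <= 1 ->
     profit n gamma V0 rho theta t vt alpha h (upd x i y) i
     <= profit n gamma V0 rho theta t vt alpha h x i).

Definition tau1 (gamma rho : R) (h' : R -> R) : R := h' 0 / gamma - rho.

Definition tau2 (n : nat) (gamma rho hbar : R) (h' : R -> R) : R :=
  / (1 + / (h' 1 / (gamma * hbar) - rho / (1 - INR n * rho))).

Definition xhat_eq (n : nat) (gamma rho theta t vt : R) (h h' : R -> R) (x : R) : Prop :=
  (h' x / (gamma * h x) - rho / (1 - INR n * rho * x))
  * (1 - vt - risk n theta t * x) = risk n theta t.

Definition equilibria_are (n : nat) (gamma V0 rho theta t vt : R)
  (alpha : nat -> R) (h : R -> R) (xs : R) : Prop :=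
  forall x : nat -> R,
    is_equilibrium n gamma V0 rho theta t vt alpha h x <->
    (forall i, (i < n)%nat -> x i = xs).

(* Main.v *)
Require Import Defs.
From Stdlib Require Import Reals.
From Coquelicot Require Import Coquelicot.
From Stdlib Require Import Lra Lia List.
Open Scope R_scope.

Lemma sumR_S n f : sumR (S n) f = sumR n f + f n.
Proof.
  unfold sumR. rewrite seq_S, map_app, fold_right_app. simpl.
  generalize (f n). intro a.
  induction (map f (seq 0 n)); simpl; [lra|]. rewrite IHl. lra.
Qed.

Lemma sumR_ext n f g : (forall j, (j < n)%nat -> f j = g j) -> sumR n f = sumR n g.
Proof.
  induction n; intros H; [reflexivity|].
  rewrite !sumR_S, IHn, H; auto; intros; apply H; lia.
Qed.

Lemma sumR_upd n x i y : (i < n)%nat -> sumR n (upd x i y) = sumR n x - x i + y.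
Proof.
  induction n; intros Hi; [lia|].
  rewrite !sumR_S. destruct (Nat.eq_dec i n) as [->|Hne].
  - rewrite (sumR_ext n (upd x n y) x).
    + unfold upd. rewrite Nat.eqb_refl. lra.
    + intros j Hj. unfold upd. destruct (Nat.eqb_spec j n); [lia|auto].
  - rewrite IHn by lia. unfold upd. destruct (Nat.eqb_spec n i); [lia|]. lra.
Qed.

Lemma sumR_const n x z : (forall j, (j < n)%nat -> x j = z) -> sumR n x = INR n * z.
Proof.
  induction n; intros H; [simpl; unfold sumR; simpl; lra|].
  rewrite sumR_S, IHn, H, S_INR by (auto; intros; apply H; lia). lra.
Qed.

Lemma sumR_bounds n x : (forall j, (j < n)%nat -> 0 <= x j <= 1) ->
  0 <= sumR n x <= INR n.
Proof.
  induction n; intros H; [unfold sumR; simpl; lra|].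
  rewrite sumR_S, S_INR. assert (Hn := H n ltac:(lia)).
  assert (IH := IHn ltac:(intros; apply H; lia)). lra.
Qed.

Lemma sumR_lt n x i : (forall j, (j < n)%nat -> 0 <= x j <= 1) -> (i < n)%nat -> x i < 1 ->
  sumR n x < INR n.
Proof.
  intros H Hi Hx.
  assert (E := sumR_upd n x i 1 Hi).
  assert (B := sumR_bounds n (upd x i 1)).
  assert (B' : 0 <= sumR n (upd x i 1) <= INR n).
  { apply B. intros j Hj. unfold upd. destruct (Nat.eqb j i); [lra|auto]. }
  lra.
Qed.

Lemma sumR_ge n x i : (forall j, (j < n)%nat -> 0 <= x j <= 1) -> (i < n)%nat ->
  x i <= sumR n x.
Proof.
  intros H Hi.
  assert (E := sumR_upd n x i 0 Hi).
  assert (B' : 0 <= sumR n (upd x i 0) <= INR n).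
  { apply sumR_bounds. intros j Hj. unfold upd. destruct (Nat.eqb j i); [lra|auto]. }
  lra.
Qed.

Lemma ln_le_sub p q : 0 < p -> 0 < q -> ln p - ln q <= (p - q) / q.
Proof.
  intros Hp Hq. rewrite <- ln_div by auto.
  assert (Hd : 0 < p / q) by (apply Rdiv_lt_0_compat; auto).
  destruct (Req_dec (ln (p/q)) 0) as [E|E].
  - assert (p / q = 1) by (apply ln_inv; [auto|lra|rewrite ln_1; auto]).
    rewrite E. replace ((p - q) / q) with (p / q - 1) by (field; lra). lra.
  - assert (X := exp_ineq1 _ E). rewrite exp_ln in X by auto.
    replace ((p - q) / q) with (p / q - 1) by (field; lra). lra.
Qed.

Lemma local_incr f c l : derivable_pt_lim f c l -> 0 < l ->
  exists d, 0 < d /\ forall s, 0 < s < d -> f c < f (c + s).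
Proof.
  intros H Hl. destruct (H l Hl) as [d Hd]. exists d. split; [apply cond_pos|].
  intros s Hs. assert (X := Hd s ltac:(lra) ltac:(rewrite Rabs_right; lra)).
  apply Rabs_def2 in X. destruct X as [X1 X2].
  assert (0 < (f (c + s) - f c) / s) by lra.
  assert (0 < f (c+s) - f c); [|lra].
  replace (f (c+s) - f c) with ((f (c + s) - f c) / s * s) by (field; lra).
  apply Rmult_lt_0_compat; lra.
Qed.

Lemma local_decr f c l : derivable_pt_lim f c l -> l < 0 ->
  exists d, 0 < d /\ forall s, 0 < s < d -> f c < f (c - s).
Proof.
  intros H Hl. destruct (H (-l) ltac:(lra)) as [d Hd]. exists d. split; [apply cond_pos|].
  intros s Hs. assert (X := Hd (-s) ltac:(lra) ltac:(rewrite Rabs_left; lra)).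
  apply Rabs_def2 in X. destruct X as [X1 X2].
  assert ((f (c + - s) - f c) / - s < 0) by lra.
  replace (c - s) with (c + - s) by ring.
  assert (0 < f (c + - s) - f c); [|lra].
  replace (f (c + - s) - f c) with (- ((f (c + - s) - f c) / - s * s)) by (field; lra).
  assert ((f (c + - s) - f c) / - s * s < 0); [|lra].
  apply Rmult_neg_pos; lra. 
Qed.


Lemma tangent (h h' : R -> R)
  (Hderiv : forall x, 0 <= x <= 1 -> is_derive h x (h' x))
  (Hconc : forall x y l, 0 <= x <= 1 -> 0 <= y <= 1 -> 0 <= l <= 1 ->
             l * h x + (1 - l) * h y <= h (l * x + (1 - l) * y))
  x y : 0 <= x <= 1 -> 0 <= y <= 1 -> h y <= h x + h' x * (y - x).
Proof.
  intros Hx Hy.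
  destruct (Rle_or_lt (h y) (h x + h' x * (y - x))) as [|HG]; auto.
  exfalso. set (G := h y - h x - h' x * (y - x)).
  assert (HG' : 0 < G) by (unfold G; lra).
  assert (Hyx : y - x <> 0) by (intro E; unfold G in HG'; replace y with x in HG' by lra; lra).
  assert (Ha : 0 < Rabs (y - x)) by (apply Rabs_pos_lt; auto).
  assert (D := proj1 (is_derive_Reals h x (h' x)) (Hderiv x Hx)).
  destruct (D (G / (2 * Rabs (y - x))) ltac:(apply Rdiv_lt_0_compat; lra)) as [d Hd].
  assert (Hdp := cond_pos d).
  set (l := Rmin 1 (d / (2 * Rabs (y - x)))).
  assert (Hl1 : l <= 1) by apply Rmin_l.
  assert (Hl2 : l <= d / (2 * Rabs (y - x))) by apply Rmin_r.
  assert (Hl0 : 0 < l).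
  { unfold l. apply Rmin_glb_lt; [lra|]. apply Rdiv_lt_0_compat; lra. }
  set (s := l * (y - x)).
  assert (Hs0 : s <> 0) by (unfold s; apply Rmult_integral_contrapositive; split; lra).
  assert (Has : Rabs s = l * Rabs (y - x)) by (unfold s; rewrite Rabs_mult, Rabs_right; lra).
  assert (Hsd : Rabs s < d).
  { rewrite Has. apply Rle_lt_trans with (d / (2 * Rabs (y - x)) * Rabs (y - x)).
    - apply Rmult_le_compat_r; lra.
    - replace (d / (2 * Rabs (y - x)) * Rabs (y - x)) with (d/2) by (field; lra). lra. }
  assert (X := Hd s Hs0 Hsd).
  assert (C := Hconc y x l Hy Hx ltac:(lra)).
  replace (l * y + (1 - l) * x) with (x + s) in C by (unfold s; ring).
  assert (E : Rabs (h (x + s) - h x - h' x * s) < G / (2 * Rabs (y - x)) * Rabs s).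
  { replace (h (x + s) - h x - h' x * s) with (((h (x + s) - h x) / s - h' x) * s) by (field; auto).
    rewrite Rabs_mult. apply Rmult_lt_compat_r; [apply Rabs_pos_lt; auto|auto]. }
  rewrite Has in E.
  replace (G / (2 * Rabs (y - x)) * (l * Rabs (y - x))) with (l * G / 2) in E by (field; lra).
  assert (h (x + s) - h x - h' x * s >= l * G).
  { assert (l*G = l*(h y) + (1-l)*h x - h x - h' x * s) by (unfold G, s; ring). lra. }
  apply Rabs_def2 in E. lra.
Qed.

Lemma hmono (h h' : R -> R)
  (Hderiv : forall x, 0 <= x <= 1 -> is_derive h x (h' x))
  (Hconc : forall x y l, 0 <= x <= 1 -> 0 <= y <= 1 -> 0 <= l <= 1 ->
             l * h x + (1 - l) * h y <= h (l * x + (1 - l) * y))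
  x y : 0 <= x -> x < y -> y <= 1 -> h' y <= h' x.
Proof.
  intros. assert (T1 := tangent h h' Hderiv Hconc x y ltac:(lra) ltac:(lra)).
  assert (T2 := tangent h h' Hderiv Hconc y x ltac:(lra) ltac:(lra)).
  nra.
Qed.


Definition Psi (a b u v w z : R) (h : R -> R) y :=
  a * ln (h y) + b * ln (u + v*y) + ln (w + z*y).

Lemma Psi_deriv a b u v w z h h' c : 0 < h c -> is_derive h c (h' c) ->
  0 < u + v*c -> 0 < w + z*c ->
  derivable_pt_lim (Psi a b u v w z h) c (a * (h' c / h c) + b * (v / (u+v*c)) + z/(w+z*c)).
Proof.
  intros H0 Hd H1 H2. apply is_derive_Reals.
  assert (A : is_derive (fun y => ln (h y)) c (h' c / h c)).
  { assert (X := is_derive_comp ln h c (/ h c) (h' c) (is_derive_ln _ H0) Hd).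
    exact X. }
  assert (B : is_derive (fun y => ln (u + v*y)) c (v / (u+v*c))).
  { assert (Y : is_derive (fun y => u + v*y) c v).
    { auto_derive; auto. ring. }
    exact (is_derive_comp ln (fun y => u + v*y) c _ _ (is_derive_ln _ H1) Y). }
  assert (C : is_derive (fun y => ln (w + z*y)) c (z / (w+z*c))).
  { assert (Y : is_derive (fun y => w + z*y) c z).
    { auto_derive; auto. ring. }
    exact (is_derive_comp ln (fun y => w + z*y) c _ _ (is_derive_ln _ H2) Y). }
  unfold Psi.
  apply (is_derive_plus (fun y => a * ln (h y) + b * ln (u + v*y)) (fun y => ln (w + z*y))); auto.
  apply (is_derive_plus (fun y => a * ln (h y)) (fun y => b * ln (u + v*y))).
  - apply is_derive_scal; auto.
  - apply is_derive_scal; auto.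
Qed.


Lemma Psi_bound a b u v w z (h h' : R -> R)
  (Hderiv : forall x, 0 <= x <= 1 -> is_derive h x (h' x))
  (Hconc : forall x y l, 0 <= x <= 1 -> 0 <= y <= 1 -> 0 <= l <= 1 ->
             l * h x + (1 - l) * h y <= h (l * x + (1 - l) * y))
  x0 y : 0 <= x0 <= 1 -> 0 <= y <= 1 -> 0 < h x0 -> 0 < h y -> 0 <= a -> 0 <= b ->
  0 < u + v*x0 -> 0 < u + v*y -> 0 < w + z*x0 -> 0 < w + z*y ->
  Psi a b u v w z h y - Psi a b u v w z h x0 <=
  (a * (h' x0 / h x0) + b * (v / (u+v*x0)) + z/(w+z*x0)) * (y - x0).
Proof.
  intros Hx Hy Hh0 Hhy Ha Hb H1 H2 H3 H4.
  assert (T := tangent h h' Hderiv Hconc x0 y Hx Hy).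
  assert (L1 := ln_le_sub _ _ Hhy Hh0).
  assert (L2 := ln_le_sub _ _ H2 H1).
  assert (L3 := ln_le_sub _ _ H4 H3).
  assert (E1 : (h y - h x0) / h x0 <= h' x0 / h x0 * (y - x0)).
  { unfold Rdiv. rewrite Rmult_comm, (Rmult_comm (h' x0)), Rmult_assoc.
    apply Rmult_le_compat_l; [left; apply Rinv_0_lt_compat; auto|lra]. }
  replace ((u + v*y - (u + v*x0)) / (u + v*x0)) with (v / (u+v*x0) * (y - x0)) in L2 by (field; lra).
  replace ((w + z*y - (w + z*x0)) / (w + z*x0)) with (z / (w+z*x0) * (y - x0)) in L3 by (field; lra).
  unfold Psi.
  assert (a * (ln (h y) - ln (h x0)) <= a * (h' x0 / h x0 * (y - x0))).
  { apply Rmult_le_compat_l; lra. }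
  assert (b * (ln (u + v*y) - ln (u + v*x0)) <= b * (v / (u+v*x0) * (y - x0))).
  { apply Rmult_le_compat_l; lra. }
  nra.
Qed.

Lemma profit_repr n gamma V0 rho theta t vt alpha h x i :
  1 < gamma -> 0 < alpha i -> 0 < Vstar n gamma V0 -> 0 < h (x i) ->
  0 < 1 - rho * sumR n x -> 0 < 1 - vt - risk n theta t * x i ->
  profit n gamma V0 rho theta t vt alpha h x i =
  (gamma - 1) / gamma * exp (1/gamma * ln (alpha i / Vstar n gamma V0)) *
  exp (Psi (1/gamma) 1 (1 - rho * (sumR n x - x i)) (- rho) (1 - vt) (- risk n theta t) h (x i)).
Proof.
  intros Hg Ha HV Hh H1 H2. unfold profit, Psi, Rpower.
  replace (alpha i * h (x i) / Vstar n gamma V0) with ((alpha i / Vstar n gamma V0) * h (x i)) by (field; lra).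
  rewrite ln_mult by (try apply Rdiv_lt_0_compat; auto).
  replace (1 - rho * (sumR n x - x i) + - rho * x i) with (1 - rho * sumR n x) by ring.
  replace (1 - vt + - risk n theta t * x i) with (1 - vt - risk n theta t * x i) by ring.
  rewrite Rmult_1_l, !exp_plus, exp_ln, exp_ln by auto.
  replace (1 / gamma * (ln (alpha i / Vstar n gamma V0) + ln (h (x i)))) with
    (1 / gamma * ln (alpha i / Vstar n gamma V0) + 1/gamma * ln (h (x i))) by ring.
  rewrite exp_plus. ring.
Qed.


Lemma upd_i x i y : upd x i y i = y.
Proof. unfold upd. rewrite Nat.eqb_refl. auto. Qed.

Lemma profit_repr' n gamma V0 rho theta t vt alpha h x i Sm :
  1 < gamma -> 0 < alpha i -> 0 < Vstar n gamma V0 -> 0 < h (x i) ->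
  sumR n x = Sm + x i ->
  0 < 1 - rho * sumR n x -> 0 < 1 - vt - risk n theta t * x i ->
  profit n gamma V0 rho theta t vt alpha h x i =
  (gamma - 1) / gamma * exp (1/gamma * ln (alpha i / Vstar n gamma V0)) *
  exp (Psi (1/gamma) 1 (1 - rho * Sm) (- rho) (1 - vt) (- risk n theta t) h (x i)).
Proof.
  intros. rewrite profit_repr by auto. replace (sumR n x - x i) with Sm by lra. reflexivity.
Qed.

Lemma profit_nonpos n gamma V0 rho theta t vt alpha h x i :
  1 < gamma -> 0 <= 1 - rho * sumR n x -> 1 - vt - risk n theta t * x i <= 0 ->
  profit n gamma V0 rho theta t vt alpha h x i <= 0.
Proof.
  intros Hg H1 H2. unfold profit, Rpower.
  assert (0 < (gamma - 1)/gamma) by (apply Rdiv_lt_0_compat; lra).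
  assert (X := exp_pos (1 / gamma * ln (alpha i * h (x i) / Vstar n gamma V0))).
  assert (0 <= (gamma - 1) / gamma * exp (1 / gamma * ln (alpha i * h (x i) / Vstar n gamma V0)) * (1 - rho * sumR n x)).
  { apply Rmult_le_pos; [|auto]. apply Rmult_le_pos; lra. }
  nra.
Qed.

Lemma profit_pos n gamma V0 rho theta t vt alpha h x i :
  1 < gamma -> 0 < 1 - rho * sumR n x -> 0 < 1 - vt - risk n theta t * x i ->
  0 < profit n gamma V0 rho theta t vt alpha h x i.
Proof.
  intros Hg H1 H2. unfold profit, Rpower.
  assert (0 < (gamma - 1)/gamma) by (apply Rdiv_lt_0_compat; lra).
  assert (X := exp_pos (1 / gamma * ln (alpha i * h (x i) / Vstar n gamma V0))).
  apply Rmult_lt_0_compat; auto. apply Rmult_lt_0_compat; auto. apply Rmult_lt_0_compat; auto.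
Qed.


Lemma psi_compare n gamma V0 rho theta t vt alpha h x i y :
  1 < gamma -> 0 < alpha i -> 0 < Vstar n gamma V0 -> (i < n)%nat ->
  (forall z, 0 <= z <= 1 -> 1 <= h z) ->
  0 < rho -> INR n * rho < 1 ->
  (forall j, (j < n)%nat -> 0 <= x j <= 1) -> 0 <= y <= 1 ->
  0 < 1 - vt - risk n theta t * x i -> 0 < 1 - vt - risk n theta t * y ->
  let Ps := Psi (1/gamma) 1 (1 - rho * (sumR n x - x i)) (- rho) (1 - vt) (- risk n theta t) h in
  let K := (gamma - 1) / gamma * exp (1/gamma * ln (alpha i / Vstar n gamma V0)) in
  0 < K /\
  profit n gamma V0 rho theta t vt alpha h x i = K * exp (Ps (x i)) /\
  profit n gamma V0 rho theta t vt alpha h (upd x i y) i = K * exp (Ps y).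
Proof.
  intros Hg Ha HV Hi Hh Hr Hnr Hx Hy H1 H2 Ps K.
  assert (Hupd : forall j, (j < n)%nat -> 0 <= upd x i y j <= 1).
  { intros j Hj. unfold upd. destruct (Nat.eqb j i); auto. }
  assert (B1 := sumR_bounds n x Hx).
  assert (B2 := sumR_bounds n _ Hupd).
  assert (Hxi := Hx i Hi).
  split; [|split].
  - unfold K. apply Rmult_lt_0_compat; [apply Rdiv_lt_0_compat; lra|apply exp_pos].
  - apply profit_repr'; auto.
    + assert (X := Hh (x i) Hxi). lra.
    + ring.
    + nra.
  - rewrite (profit_repr' n gamma V0 rho theta t vt alpha h (upd x i y) i (sumR n x - x i));
      rewrite ?upd_i; auto.
    + assert (X := Hh y Hy). lra.
    + rewrite sumR_upd by auto. ring.
    + nra.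
Qed.


Lemma eq_foc n gamma V0 rho theta t vt alpha h h' x i :
  1 < gamma -> 0 < Vstar n gamma V0 ->
  (forall i, (i < n)%nat -> 0 < alpha i) ->
  (forall x, 0 <= x <= 1 -> is_derive h x (h' x)) ->
  (forall z, 0 <= z <= 1 -> 1 <= h z) ->
  0 < rho -> INR n * rho < 1 -> 0 <= risk n theta t -> vt < 1 ->
  is_equilibrium n gamma V0 rho theta t vt alpha h x -> (i < n)%nat ->
  let r := risk n theta t in
  let D := h' (x i) / (gamma * h (x i)) - rho / (1 - rho * sumR n x) - r / (1 - vt - r * x i) in
  0 < 1 - vt - r * x i /\ (x i < 1 -> D <= 0) /\ (0 < x i -> 0 <= D).
Proof.
  intros Hg HV Ha Hd Hh Hr Hnr Hrisk Hvt [Hx Heq] Hi r D. fold r in Hrisk.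
  assert (Hxi := Hx i Hi).
  assert (B1 := sumR_bounds n x Hx).
  assert (HS : 0 < 1 - rho * sumR n x) by nra.
  assert (E1 : 0 < 1 - vt - r * x i).
  { destruct (Rlt_or_le 0 (1 - vt - r * x i)) as [|Hle]; auto. exfalso.
    assert (P1 := profit_nonpos n gamma V0 rho theta t vt alpha h x i Hg ltac:(lra) Hle).
    assert (Hupd : forall j, (j < n)%nat -> 0 <= upd x i 0 j <= 1).
    { intros j Hj. unfold upd. destruct (Nat.eqb j i); auto. lra. }
    assert (B2 := sumR_bounds n _ Hupd).
    assert (P2 := profit_pos n gamma V0 rho theta t vt alpha h (upd x i 0) i Hg ltac:(nra)
                    ltac:(rewrite upd_i; unfold r in *; lra)).
    assert (X := Heq i 0 Hi ltac:(lra)). lra. }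
  assert (Hhx : 0 < h (x i)) by (assert (X := Hh _ Hxi); lra).
  set (Ps := Psi (1/gamma) 1 (1 - rho * (sumR n x - x i)) (- rho) (1 - vt) (- r) h).
  assert (Hder : derivable_pt_lim Ps (x i) D).
  { assert (X := Psi_deriv (1/gamma) 1 (1 - rho * (sumR n x - x i)) (- rho) (1 - vt) (- r) h h' (x i)
       Hhx (Hd _ Hxi) ltac:(lra) ltac:(lra)).
    replace D with (1 / gamma * (h' (x i) / h (x i)) + 1 * (- rho / (1 - rho * (sumR n x - x i) + - rho * x i)) +
       - r / (1 - vt + - r * x i)); auto.
    unfold D. replace (1 - rho * (sumR n x - x i) + - rho * x i) with (1 - rho * sumR n x) by ring.
    replace (1 - vt + - r * x i) with (1 - vt - r * x i) by ring.
    field. repeat split; lra. }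
  split; [auto|split].
  - intros Hlt. destruct (Rle_or_lt D 0) as [|HD]; auto. exfalso.
    destruct (local_incr _ _ _ Hder HD) as [d [Hd0 Hloc]].
    set (s := Rmin d (Rmin (1 - x i) ((1 - vt - r * x i) / (r + 1))) / 2).
    assert (Hs1 : Rmin d (Rmin (1 - x i) ((1 - vt - r * x i) / (r + 1))) <= d) by apply Rmin_l.
    assert (Hs2 : Rmin d (Rmin (1 - x i) ((1 - vt - r * x i) / (r + 1))) <= Rmin (1 - x i) ((1 - vt - r * x i) / (r + 1))) by apply Rmin_r.
    assert (Hs3 := Rmin_l (1 - x i) ((1 - vt - r * x i) / (r + 1))).
    assert (Hs4 := Rmin_r (1 - x i) ((1 - vt - r * x i) / (r + 1))).
    assert (Hq : 0 < (1 - vt - r * x i) / (r + 1)) by (apply Rdiv_lt_0_compat; lra).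
    assert (Hs0 : 0 < s).
    { unfold s. assert (0 < Rmin d (Rmin (1 - x i) ((1 - vt - r * x i) / (r + 1)))); [|lra].
      repeat apply Rmin_glb_lt; lra. }
    assert (Hsr : (r + 1) * s < 1 - vt - r * x i).
    { assert (s <= (1 - vt - r * x i) / (r + 1) / 2) by (unfold s; lra).
      assert ((r+1) * s <= (r+1) * ((1 - vt - r * x i) / (r + 1) / 2)) by (apply Rmult_le_compat_l; lra).
      replace ((r+1) * ((1 - vt - r * x i) / (r + 1) / 2)) with ((1 - vt - r * x i)/2) in * by (field; lra).
      lra. }
    assert (L := Hloc s ltac:(unfold s in *; lra)).
    destruct (psi_compare n gamma V0 rho theta t vt alpha h x i (x i + s) Hg (Ha i Hi) HV Hi Hh Hr Hnr Hx
      ltac:(unfold s in *; lra) E1 ltac:(fold r; nra)) as [HK [P1 P2]].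
    assert (X := Heq i (x i + s) Hi ltac:(unfold s in *; lra)).
    fold r in P1, P2. fold Ps in P1, P2.
    assert (exp (Ps (x i)) < exp (Ps (x i + s))) by (apply exp_increasing; auto).
    nra.
  - intros Hlt. destruct (Rle_or_lt 0 D) as [|HD]; auto. exfalso.
    destruct (local_decr _ _ _ Hder HD) as [d [Hd0 Hloc]].
    set (s := Rmin d (x i) / 2).
    assert (Hs1 := Rmin_l d (x i)). assert (Hs2 := Rmin_r d (x i)).
    assert (Hs0 : 0 < s) by (unfold s; assert (0 < Rmin d (x i)) by (apply Rmin_glb_lt; lra); lra).
    assert (L := Hloc s ltac:(unfold s in *; lra)).
    destruct (psi_compare n gamma V0 rho theta t vt alpha h x i (x i - s) Hg (Ha i Hi) HV Hi Hh Hr Hnr Hx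
      ltac:(unfold s in *; lra) E1 ltac:(fold r; nra)) as [HK [P1 P2]].
    assert (X := Heq i (x i - s) Hi ltac:(unfold s in *; lra)).
    fold r in P1, P2. fold Ps in P1, P2.
    assert (exp (Ps (x i)) < exp (Ps (x i - s))) by (apply exp_increasing; auto).
    nra.
Qed.


Lemma eq_suff n gamma V0 rho theta t vt alpha h h' x z :
  1 < gamma -> 0 < Vstar n gamma V0 ->
  (forall i, (i < n)%nat -> 0 < alpha i) ->
  (forall x, 0 <= x <= 1 -> is_derive h x (h' x)) ->
  (forall x y l, 0 <= x <= 1 -> 0 <= y <= 1 -> 0 <= l <= 1 ->
             l * h x + (1 - l) * h y <= h (l * x + (1 - l) * y)) ->
  (forall z, 0 <= z <= 1 -> 1 <= h z) ->
  0 < rho -> INR n * rho < 1 -> 0 <= risk n theta t ->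
  (forall j, (j < n)%nat -> x j = z) -> 0 <= z <= 1 ->
  let r := risk n theta t in
  let D := h' z / (gamma * h z) - rho / (1 - rho * (INR n * z)) - r / (1 - vt - r * z) in
  0 < 1 - vt - r * z -> (z < 1 -> D <= 0) -> (0 < z -> 0 <= D) ->
  is_equilibrium n gamma V0 rho theta t vt alpha h x.
Proof.
  intros Hg HV Ha Hd Hc Hh Hr Hnr Hrisk Hx Hz r D Hw HD1 HD2. fold r in Hrisk.
  assert (Hb : forall j, (j < n)%nat -> 0 <= x j <= 1) by (intros j Hj; rewrite Hx; auto).
  split; auto. intros i y Hi Hy.
  assert (HS := sumR_const n x z Hx).
  assert (B1 := sumR_bounds n x Hb).
  assert (Hupd : forall j, (j < n)%nat -> 0 <= upd x i y j <= 1).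
  { intros j Hj. unfold upd. destruct (Nat.eqb j i); auto. }
  assert (B2 := sumR_bounds n _ Hupd).
  assert (Hxi : x i = z) by auto.
  assert (HnR := pos_INR n).
  assert (Hrz : rho * (INR n * z) < 1).
  { assert (INR n * rho * z <= INR n * rho * 1) by (apply Rmult_le_compat_l; nra). nra. }
  destruct (Rle_or_lt (1 - vt - r * y) 0) as [Hle|Hlt].
  - assert (P1 := profit_nonpos n gamma V0 rho theta t vt alpha h (upd x i y) i Hg ltac:(nra)
                    ltac:(rewrite upd_i; auto)).
    assert (P2 := profit_pos n gamma V0 rho theta t vt alpha h x i Hg ltac:(nra)
                    ltac:(rewrite Hxi; auto)).
    lra.
  - destruct (psi_compare n gamma V0 rho theta t vt alpha h x i y Hg (Ha i Hi) HV Hi Hh Hr Hnr Hb Hy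
      ltac:(rewrite Hxi; auto) Hlt) as [HK [P1 P2]].
    rewrite P1, P2. fold r in P1, P2 |- *.
    set (Ps := Psi (1/gamma) 1 (1 - rho * (sumR n x - x i)) (- rho) (1 - vt) (- r) h).
    rewrite Hxi.
    assert (Hhz : 0 < h z) by (assert (X := Hh z Hz); lra).
    assert (Hhy : 0 < h y) by (assert (X := Hh y Hy); lra).
    assert (Hg0 : 0 <= 1/gamma) by (left; apply Rdiv_lt_0_compat; lra).
    assert (Hu1 : 0 < 1 - rho * (sumR n x - x i) + - rho * z) by (rewrite HS, Hxi; lra).
    assert (Hu2 : 0 < 1 - rho * (sumR n x - x i) + - rho * y) by (assert (sumR n x - x i + y <= INR n) by (rewrite <- (sumR_upd n x i y Hi); lra); assert (rho * (sumR n x - x i + y) <= rho * INR n) by (apply Rmult_le_compat_l; lra); lra).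
    assert (Hw1 : 0 < 1 - vt + - r * z) by lra.
    assert (Hw2 : 0 < 1 - vt + - r * y) by lra.
    assert (Bd := Psi_bound (1/gamma) 1 (1 - rho * (sumR n x - x i)) (- rho) (1 - vt) (- r) h h' Hd Hc z y Hz Hy
       Hhz Hhy Hg0 ltac:(lra) Hu1 Hu2 Hw1 Hw2).
    fold Ps in Bd.
    replace (1 / gamma * (h' z / h z) + 1 * (- rho / (1 - rho * (sumR n x - x i) + - rho * z)) +
        - r / (1 - vt + - r * z)) with D in Bd.
    2:{ unfold D. rewrite HS, Hxi.
        replace (1 - rho * (INR n * z - z) + - rho * z) with (1 - rho * (INR n * z)) by ring.
        replace (1 - vt + - r * z) with (1 - vt - r * z) by ring.
        field. repeat split; lra. }
    assert (D * (y - z) <= 0).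
    { destruct (Rtotal_order y z) as [Hyz|[Hyz|Hyz]].
      - assert (0 <= D) by (apply HD2; lra). nra.
      - subst; lra.
      - assert (D <= 0) by (apply HD1; lra). nra. }
    assert (exp (Ps y) <= exp (Ps z)).
    { destruct (Rle_lt_or_eq_dec (Ps y) (Ps z) ltac:(lra)) as [E|E].
      - left. apply exp_increasing; auto.
      - rewrite E; lra. }
    nra.
Qed.


Lemma exists_root (n : nat) gamma rho r vt (h h' : R -> R) b :
  1 < gamma -> (forall x, 0 <= x <= 1 -> is_derive h x (h' x)) ->
  (forall z, 0 <= z <= 1 -> 1 <= h z) ->
  0 < rho -> 0 < INR n -> INR n * rho < 1 -> 0 <= r ->
  let Ds := fun x => h' x / (gamma * h x) - rho / (1 - INR n * rho * x) - r / (1 - vt - r * x) in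
  0 < b <= 1 -> 0 < 1 - vt - r * b -> 0 < Ds 0 -> Ds b < 0 ->
  exists M, 0 < M < b /\ Ds M = 0.
Proof.
  intros Hg Hd Hh Hr Hn Hnr Hr0 Ds Hb Hwb H0 Hb0.
  set (Phi := Psi (1/gamma) (1 / INR n) 1 (- (INR n * rho)) (1 - vt) (- r) h).
  assert (Hder : forall c, 0 <= c <= b -> derivable_pt_lim Phi c (Ds c)).
  { intros c Hc.
    assert (Hhc : 0 < h c) by (assert (X := Hh c ltac:(lra)); lra).
    assert (Hu : 0 < 1 + - (INR n * rho) * c).
    { assert (INR n * rho * c <= INR n * rho * 1) by (apply Rmult_le_compat_l; nra). lra. }
    assert (Hw : 0 < 1 - vt + - r * c) by nra.
    assert (X := Psi_deriv (1/gamma) (1 / INR n) 1 (- (INR n * rho)) (1 - vt) (- r) h h' c Hhc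
                  (Hd c ltac:(lra)) Hu Hw).
    replace (Ds c) with (1 / gamma * (h' c / h c) + 1 / INR n * (- (INR n * rho) / (1 + - (INR n * rho) * c)) +
       - r / (1 - vt + - r * c)); auto.
    unfold Ds. replace (1 + - (INR n * rho) * c) with (1 - INR n * rho * c) in * by ring.
    replace (1 - vt + - r * c) with (1 - vt - r * c) in * by ring.
    field. repeat split; lra. }
  assert (Hcont : forall c, 0 <= c <= b -> continuity_pt Phi c).
  { intros c Hc. apply derivable_continuous_pt. exists (Ds c). apply Hder; auto. }
  destruct (continuity_ab_maj Phi 0 b ltac:(lra) Hcont) as [M [HM1 HM2]].
  exists M.
  assert (HM0 : M <> 0).
  { intro E. destruct (local_incr _ _ _ (Hder 0 ltac:(lra)) H0) as [d [Hd0 Hl]].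
    set (s := Rmin d b / 2). assert (Hs1 := Rmin_l d b). assert (Hs2 := Rmin_r d b).
    assert (0 < Rmin d b) by (apply Rmin_glb_lt; lra).
    assert (X := Hl s ltac:(unfold s; lra)).
    assert (Y := HM1 (0 + s) ltac:(unfold s; lra)). subst M. lra. }
  assert (HMb : M <> b).
  { intro E. destruct (local_decr _ _ _ (Hder b ltac:(lra)) Hb0) as [d [Hd0 Hl]].
    set (s := Rmin d b / 2). assert (Hs1 := Rmin_l d b). assert (Hs2 := Rmin_r d b).
    assert (0 < Rmin d b) by (apply Rmin_glb_lt; lra).
    assert (X := Hl s ltac:(unfold s; lra)).
    assert (Y := HM1 (b - s) ltac:(unfold s; lra)). subst M. lra. }
  assert (HMi : 0 < M < b) by lra.
  split; auto.
  destruct (Rtotal_order (Ds M) 0) as [HD|[HD|HD]]; auto; exfalso.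
  - destruct (local_decr _ _ _ (Hder M ltac:(lra)) HD) as [d [Hd0 Hl]].
    set (s := Rmin d M / 2). assert (Hs1 := Rmin_l d M). assert (Hs2 := Rmin_r d M).
    assert (0 < Rmin d M) by (apply Rmin_glb_lt; lra).
    assert (X := Hl s ltac:(unfold s; lra)).
    assert (Y := HM1 (M - s) ltac:(unfold s; lra)). lra.
  - destruct (local_incr _ _ _ (Hder M ltac:(lra)) HD) as [d [Hd0 Hl]].
    set (s := Rmin d (b - M) / 2). assert (Hs1 := Rmin_l d (b - M)). assert (Hs2 := Rmin_r d (b - M)).
    assert (0 < Rmin d (b - M)) by (apply Rmin_glb_lt; lra).
    assert (X := Hl s ltac:(unfold s; lra)).
    assert (Y := HM1 (M + s) ltac:(unfold s; lra)). lra.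
Qed.

Lemma frac_le a c d : 0 <= a -> 0 < c -> c <= d -> a/d <= a/c.
Proof. intros. unfold Rdiv. apply Rmult_le_compat_l; auto. apply Rinv_le_contravar; auto. Qed.
Lemma frac_lt a c d : 0 < a -> 0 < c -> c < d -> a/d < a/c.
Proof. intros. unfold Rdiv. apply Rmult_lt_compat_l; auto. apply Rinv_lt_contravar; auto. nra. Qed.
Lemma div_le_l a b c : 0 < c -> a <= b * c -> a / c <= b.
Proof. intros. replace b with (b * c / c) by (field; lra). unfold Rdiv. apply Rmult_le_compat_r; auto. left; apply Rinv_0_lt_compat; auto. Qed.
Lemma div_lt_r a b c : 0 < c -> b * c < a -> b < a / c.
Proof. intros. replace b with (b * c / c) by (field; lra). unfold Rdiv. apply Rmult_lt_compat_r; auto. apply Rinv_0_lt_compat; auto. Qed.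
Lemma div_le_r a b c : 0 < c -> b * c <= a -> b <= a / c.
Proof. intros. replace b with (b * c / c) by (field; lra). unfold Rdiv. apply Rmult_le_compat_r; auto. left; apply Rinv_0_lt_compat; auto. Qed.
Lemma div_lt_l a b c : 0 < c -> a < b * c -> a / c < b.
Proof. intros. replace b with (b * c / c) by (field; lra). unfold Rdiv. apply Rmult_lt_compat_r; auto. apply Rinv_0_lt_compat; auto. Qed.


Theorem theorem2 (n : nat) (gamma V0 rho theta t vt hbar : R)
  (alpha : nat -> R) (h h' : R -> R)
  (Hn : (1 <= n)%nat) (Hgamma : 1 < gamma) (HV0 : 0 < V0)
  (Hrho : 0 < rho < 1 / INR n) (Htheta : 1 < theta)
  (Ht : 0 <= t <= INR n) (Hvt : 0 < vt < 1)
  (Halpha_dec : forall i j, (i < j)%nat -> (j < n)%nat -> alpha j < alpha i)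
  (Halpha_pos : forall i, (i < n)%nat -> 0 < alpha i)
  (Hderiv : forall x, 0 <= x <= 1 -> is_derive h x (h' x))
  (Hincr : forall x y, 0 <= x -> x < y -> y <= 1 -> h x < h y)
  (Hconc : forall x y l, 0 <= x <= 1 -> 0 <= y <= 1 -> 0 <= l <= 1 ->
             l * h x + (1 - l) * h y <= h (l * x + (1 - l) * y))
  (Hrange : forall x, 0 <= x <= 1 -> 1 <= h x)
  (Hh0 : h 0 = 1) (Hh1 : h 1 = hbar) (Hhbar : 1 < hbar)
  (Hcond1 : INR n * ((gamma - 1) / gamma) < 1)
  (Hcond2 : Rpower hbar (1 / gamma) > 1 / (1 - INR n * rho))
  (Hcond3 : forall x, 0 <= x <= 1 ->
             h' x / (gamma * h x) > INR n * rho / (1 - INR n * rho * x)) :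
  tau1 gamma rho h' > tau2 n gamma rho hbar h' /\ tau2 n gamma rho hbar h' > 0 /\
  (risk n theta t >= tau1 gamma rho h' * (1 - vt) ->
     equilibria_are n gamma V0 rho theta t vt alpha h 0) /\
  (risk n theta t <= tau2 n gamma rho hbar h' * (1 - vt) ->
     equilibria_are n gamma V0 rho theta t vt alpha h 1) /\
  (tau2 n gamma rho hbar h' * (1 - vt) < risk n theta t < tau1 gamma rho h' * (1 - vt) ->
     exists xh, 0 < xh < 1 /\
       xhat_eq n gamma rho theta t vt h h' xh /\
       (forall y, 0 < y < 1 -> xhat_eq n gamma rho theta t vt h h' y -> y = xh) /\
       equilibria_are n gamma V0 rho theta t vt alpha h xh).
Proof.
  assert (HnR : 1 <= INR n) by (apply (le_INR 1 n) in Hn; simpl in Hn; lra).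
  assert (Hnr : INR n * rho < 1).
  { destruct Hrho as [_ H]. apply Rmult_lt_compat_l with (r := INR n) in H; [|lra].
    replace (INR n * (1 / INR n)) with 1 in H by (field; lra). lra. }
  assert (HV : 0 < Vstar n gamma V0).
  { unfold Vstar. assert (INR n * (gamma - 1) < gamma).
    { apply Rmult_lt_compat_r with (r := gamma) in Hcond1; [|lra].
      replace (INR n * ((gamma - 1) / gamma) * gamma) with (INR n * (gamma - 1)) in Hcond1 by (field; lra). lra. }
    apply Rmult_lt_0_compat; auto. apply Rdiv_lt_0_compat; lra. }
  assert (Hrisk : 0 <= risk n theta t).
  { unfold risk, Rdiv. apply Rmult_le_pos; [nra|left; apply Rinv_0_lt_compat; lra]. }
  set (r := risk n theta t) in *.
  destruct Hrho as [Hrho0 _].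
  assert (Hden : forall x, 0 <= x <= 1 -> 0 < 1 - INR n * rho * x).
  { intros x Hx. assert (INR n * rho * x <= INR n * rho * 1) by (apply Rmult_le_compat_l; nra). lra. }
  assert (Hhp : forall x, 0 <= x <= 1 -> 0 < h' x).
  { intros x Hx. assert (X := Hcond3 x Hx). assert (Y := Hden x Hx).
    assert (0 < INR n * rho / (1 - INR n * rho * x)) by (apply Rdiv_lt_0_compat; nra).
    assert (Hhx := Hrange x Hx).
    replace (h' x) with (h' x / (gamma * h x) * (gamma * h x)) by (field; lra).
    apply Rmult_lt_0_compat; nra. }
  assert (Hqmono : forall x y, 0 <= x -> x <= y -> y <= 1 -> h' y / (gamma * h y) <= h' x / (gamma * h x)).
  { intros x y H1 H2 H3. destruct (Req_dec x y) as [->|Hne]; [lra|].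
    assert (Hm := hmono h h' Hderiv Hconc x y H1 ltac:(lra) H3).
    assert (Hi := Hincr x y H1 ltac:(lra) H3).
    assert (Hhx := Hrange x ltac:(lra)). assert (Hpy := Hhp y ltac:(lra)).
    apply Rle_trans with (h' x / (gamma * h y)).
    - unfold Rdiv. apply Rmult_le_compat_r; [left; apply Rinv_0_lt_compat; nra|auto].
    - apply frac_le; nra. }
  assert (Hq0 : h' 0 / (gamma * h 0) = h' 0 / gamma) by (rewrite Hh0, Rmult_1_r; auto).
  assert (Hq1 : h' 1 / (gamma * h 1) = h' 1 / (gamma * hbar)) by (rewrite Hh1; auto).
  assert (Hq01 : h' 1 / (gamma * hbar) <= h' 0 / gamma).
  { rewrite <- Hq0, <- Hq1. apply Hqmono; lra. }
  set (A := h' 1 / (gamma * hbar) - rho / (1 - INR n * rho)).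
  assert (Hden1 : 0 < 1 - INR n * rho) by lra.
  assert (HrA : rho / (1 - INR n * rho) <= INR n * rho / (1 - INR n * rho)).
  { unfold Rdiv. apply Rmult_le_compat_r; [left; apply Rinv_0_lt_compat; lra|nra]. }
  assert (HA : 0 < A).
  { assert (X := Hcond3 1 ltac:(lra)). rewrite Hq1, Rmult_1_r in X. unfold A. revert X HrA. generalize (h' 1 / (gamma*hbar)) (rho/(1-INR n*rho)) (INR n*rho/(1-INR n*rho)). intros; lra. }
  assert (Htau2 : tau2 n gamma rho hbar h' = A / (A + 1)).
  { unfold tau2. fold A. field. lra. }
  assert (Hrr : rho <= rho / (1 - INR n * rho)).
  { apply div_le_r; auto. nra. }
  assert (Htau1 : A <= tau1 gamma rho h') by (unfold tau1, A; lra).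
  assert (HAA : A / (A + 1) < A).
  { apply div_lt_l; [lra|nra]. }
  assert (HA1 : A / (A + 1) < 1) by (apply div_lt_l; lra).
  assert (HA0 : 0 < A / (A + 1)) by (apply Rdiv_lt_0_compat; lra).
  rewrite Htau2.
  split; [lra|]. split; [lra|].
  split; [|split].
  - intros Hc1.
    assert (Hr0 : 0 < r) by nra.
    assert (Hrt : tau1 gamma rho h' <= r/(1-vt)) by (apply div_le_r; lra).
    unfold tau1 in Hrt.
    unfold equilibria_are. intros x. split.
    + intros Heq i Hi.
      pose proof (eq_foc n gamma V0 rho theta t vt alpha h h' x i Hgamma HV Halpha_pos Hderiv Hrange Hrho0 Hnr Hrisk ltac:(lra) Heq Hi) as F.
      cbv zeta in F. fold r in F. destruct F as [E1 [E2 E3]].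
      destruct Heq as [Hx _]. assert (Hxi := Hx i Hi).
      destruct (Rlt_or_le 0 (x i)) as [Hp|Hp]; [|lra].
      exfalso. assert (D0 := E3 Hp).
      assert (B := sumR_bounds n x Hx).
      assert (Q := Hqmono 0 (x i) ltac:(lra) ltac:(lra) ltac:(lra)). rewrite Hq0 in Q.
      assert (rho * sumR n x <= rho * INR n) by (apply Rmult_le_compat_l; lra).
      assert (R1 : rho <= rho / (1 - rho * sumR n x)) by (apply div_le_r; nra).
      assert (R2 : r/(1-vt) < r/(1-vt-r*x i)) by (apply frac_lt; nra).
      lra.
    + intros Hall.
      apply (eq_suff n gamma V0 rho theta t vt alpha h h' x 0); auto; try lra.
      all: try (intros; unfold r in *; lra).
      intros _. fold r. rewrite Hh0. replace (1 - rho * (INR n * 0)) with 1 by ring.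
        replace (1 - vt - r * 0) with (1 - vt) by ring. rewrite Rmult_1_r. 
        assert (rho / 1 = rho) by field. lra.
  - intros Hc2.
    assert (Hr1 : r < 1 - vt) by nra.
    assert (r*(A+1) <= A*(1-vt)).
    { replace (A*(1-vt)) with (A/(A+1)*(1-vt)*(A+1)) by (field; lra).
      apply Rmult_le_compat_r; lra. }
    assert (Hrd : r/(1-vt-r) <= A) by (apply div_le_l; lra).
    unfold A in Hrd.
    unfold equilibria_are. intros x. split.
    + intros Heq i Hi.
      pose proof (eq_foc n gamma V0 rho theta t vt alpha h h' x i Hgamma HV Halpha_pos Hderiv Hrange Hrho0 Hnr Hrisk ltac:(lra) Heq Hi) as F.
      cbv zeta in F. fold r in F. destruct F as [E1 [E2 E3]].
      destruct Heq as [Hx _]. assert (Hxi := Hx i Hi).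
      destruct (Rlt_or_le (x i) 1) as [Hp|Hp]; [|lra].
      exfalso. assert (D0 := E2 Hp).
      assert (B := sumR_lt n x i Hx Hi Hp).
      assert (Q := Hqmono (x i) 1 ltac:(lra) ltac:(lra) ltac:(lra)). rewrite Hq1 in Q.
      assert (rho * sumR n x < rho * INR n) by (apply Rmult_lt_compat_l; lra).
      assert (R1 : rho / (1 - rho * sumR n x) < rho / (1 - INR n * rho)) by (apply frac_lt; lra).
      assert (R2 : r/(1-vt-r*x i) <= r/(1-vt-r)) by (apply frac_le; nra).
      lra.
    + intros Hall.
      apply (eq_suff n gamma V0 rho theta t vt alpha h h' x 1); auto; try lra.
      all: try (intros; unfold r in *; lra).
      intros _. unfold r in *. rewrite Hq1.
      replace (1 - rho * (INR n * 1)) with (1 - INR n * rho) by ring.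
      replace (1 - vt - risk n theta t * 1) with (1 - vt - risk n theta t) by ring. lra.
  - intros [Hc3a Hc3b].
    assert (Hr0 : 0 < r) by nra.
    assert (HrA3 : r*(A+1) > A*(1-vt)).
    { replace (A*(1-vt)) with (A/(A+1)*(1-vt)*(A+1)) by (field; lra).
      apply Rmult_lt_compat_r; lra. }
    set (Ds := fun x => h' x / (gamma * h x) - rho / (1 - INR n * rho * x) - r / (1 - vt - r * x)).
    assert (HD0 : 0 < Ds 0).
    { unfold Ds. rewrite Hq0. replace (1 - INR n * rho * 0) with 1 by ring.
      replace (1 - vt - r * 0) with (1 - vt) by ring.
      assert (rho / 1 = rho) by field.
      assert (r / (1 - vt) < tau1 gamma rho h') by (apply div_lt_l; lra).
      unfold tau1 in *. lra. }
    assert (HD1 : 0 < 1 - vt - r -> Ds 1 < 0).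
    { intros Hw. unfold Ds. rewrite Hq1. replace (1 - INR n * rho * 1) with (1 - INR n * rho) by ring.
      replace (1 - vt - r * 1) with (1 - vt - r) by ring.
      assert (A < r / (1 - vt - r)) by (apply div_lt_r; lra).
      unfold A in *. lra. }
    assert (Hdec : forall y1 y2, 0 <= y1 -> y1 < y2 -> y2 <= 1 -> 0 < 1 - vt - r * y2 -> Ds y2 < Ds y1).
    { intros y1 y2 H1 H2 H3 H4. unfold Ds.
      assert (Q := Hqmono y1 y2 H1 ltac:(lra) H3).
      assert (R1 : rho / (1 - INR n * rho * y1) < rho / (1 - INR n * rho * y2)).
      { apply frac_lt; auto. apply Hden; lra. assert (0 < INR n * rho) by nra. assert (0 < INR n * rho * (y2 - y1)) by (apply Rmult_lt_0_compat; lra). lra. }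
      assert (R2 : r / (1 - vt - r * y1) <= r / (1 - vt - r * y2)) by (apply frac_le; nra).
      lra. }
    assert (Huniq : forall y1 y2, 0 <= y1 <= 1 -> 0 <= y2 <= 1 -> 0 < 1 - vt - r * y1 -> 0 < 1 - vt - r * y2 ->
               Ds y1 = 0 -> Ds y2 = 0 -> y1 = y2).
    { intros y1 y2 H1 H2 H3 H4 H5 H6.
      destruct (Rtotal_order y1 y2) as [L|[L|L]]; auto; exfalso.
      - assert (X := Hdec y1 y2 ltac:(lra) L ltac:(lra) H4). lra.
      - assert (X := Hdec y2 y1 ltac:(lra) L ltac:(lra) H3). lra. }
    assert (Hb : exists b, 0 < b <= 1 /\ 0 < 1 - vt - r * b /\ Ds b < 0).
    { destruct (Rlt_or_le 0 (1 - vt - r)) as [Hw|Hw].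
      - exists 1. split; [lra|]. split; [lra|]. auto.
      - set (K := h' 0 / gamma).
        assert (HK : 0 < K) by (apply Rdiv_lt_0_compat; [apply Hhp; lra|lra]).
        assert (HKr : 0 < K / r) by (apply Rdiv_lt_0_compat; lra).
        assert (Hiv : 0 < / (1 - vt)) by (apply Rinv_0_lt_compat; lra).
        set (u := / (/ (1 - vt) + K / r)).
        assert (Hu0 : 0 < u) by (apply Rinv_0_lt_compat; lra).
        assert (Hu1 : u < 1 - vt).
        { assert (E1 : u * (/ (1 - vt) + K / r) = 1) by (unfold u; apply Rinv_l; lra).
          assert (E2 : / (1 - vt) * (1 - vt) = 1) by (field; lra).
          assert (E3 : 0 < u * (K / r)) by (apply Rmult_lt_0_compat; lra).
          assert (E4 : u * / (1 - vt) < 1) by lra.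
          assert (E5 : u * / (1 - vt) * (1 - vt) < 1 * (1 - vt)) by (apply Rmult_lt_compat_r; lra).
          replace (u * / (1 - vt) * (1 - vt)) with u in E5 by (field; lra). lra. }
        assert (Hru : r / u = r / (1 - vt) + K).
        { unfold u. unfold Rdiv at 1. rewrite Rinv_inv. field. lra. }
        assert (Hrv : 0 < r / (1 - vt)) by (apply Rdiv_lt_0_compat; lra).
        exists ((1 - vt - u) / r).
        assert (Hbw : 1 - vt - r * ((1 - vt - u) / r) = u) by (field; lra).
        assert (Hbp : 0 < (1 - vt - u) / r) by (apply Rdiv_lt_0_compat; lra).
        assert (Hb1 : (1 - vt - u) / r <= 1) by (apply div_le_l; lra).
        split; [lra|]. split; [lra|].
        unfold Ds. rewrite Hbw, Hru.
        assert (Q := Hqmono 0 ((1 - vt - u) / r) ltac:(lra) ltac:(lra) Hb1). rewrite Hq0 in Q.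
        assert (0 < rho / (1 - INR n * rho * ((1 - vt - u) / r))) by (apply Rdiv_lt_0_compat; auto; apply Hden; lra).
        unfold K in *. lra. }
    destruct Hb as [b [Hb1 [Hb2 Hb3]]].
    destruct (exists_root n gamma rho r vt h h' b Hgamma Hderiv Hrange Hrho0 ltac:(lra) Hnr Hrisk Hb1 Hb2 HD0 Hb3)
      as [M [HM HDM]].
    change (Ds M = 0) in HDM.
    assert (Hmw : 0 < 1 - vt - r * M) by nra.
    exists M. split; [lra|]. split; [|split].
    + unfold xhat_eq. change (risk n theta t) with r.
      unfold Ds in HDM.
      assert (E : h' M / (gamma * h M) - rho / (1 - INR n * rho * M) = r / (1 - vt - r * M)) by lra.
      rewrite E. field. lra.
    + intros y Hy Hxe. unfold xhat_eq in Hxe. change (risk n theta t) with r in Hxe.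
      assert (Pf : 0 < h' y / (gamma * h y) - rho / (1 - INR n * rho * y)).
      { assert (X := Hcond3 y ltac:(lra)).
        assert (rho / (1 - INR n * rho * y) <= INR n * rho / (1 - INR n * rho * y)).
        { unfold Rdiv. apply Rmult_le_compat_r; [left; apply Rinv_0_lt_compat; apply Hden; lra|nra]. }
        lra. }
      assert (Hwy : 0 < 1 - vt - r * y).
      { destruct (Rlt_or_le 0 (1 - vt - r * y)) as [|Hle]; auto. exfalso. nra. }
      assert (Dy : Ds y = 0).
      { assert (E : r / (1 - vt - r * y) = h' y / (gamma * h y) - rho / (1 - INR n * rho * y)).
        { assert (Hhy := Hrange y ltac:(lra)). assert (Hdy := Hden y ltac:(lra)).
          assert (0 < gamma * h y) by nra.
          rewrite <- Hxe at 1. field. repeat split; lra. }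
        unfold Ds. cbv beta. lra. }
      apply (Huniq y M); auto; lra.
    + unfold equilibria_are. intros x. split.
      * intros Heq.
        assert (Hx := proj1 Heq).
        assert (Hnolt : forall i j, (i < n)%nat -> (j < n)%nat -> x i < x j -> False).
        { intros i j Hi Hj L.
          pose proof (eq_foc n gamma V0 rho theta t vt alpha h h' x i Hgamma HV Halpha_pos Hderiv Hrange Hrho0 Hnr Hrisk ltac:(lra) Heq Hi) as Fi.
          pose proof (eq_foc n gamma V0 rho theta t vt alpha h h' x j Hgamma HV Halpha_pos Hderiv Hrange Hrho0 Hnr Hrisk ltac:(lra) Heq Hj) as Fj.
          cbv zeta in Fi, Fj. fold r in Fi, Fj.
          destruct Fi as [Ei1 [Ei2 Ei3]]. destruct Fj as [Ej1 [Ej2 Ej3]].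
          assert (Hxi := Hx i Hi). assert (Hxj := Hx j Hj).
          assert (Di := Ei2 ltac:(lra)). assert (Dj := Ej3 ltac:(lra)).
          assert (Q := Hqmono (x i) (x j) ltac:(lra) ltac:(lra) ltac:(lra)).
          assert (R : r / (1 - vt - r * x i) < r / (1 - vt - r * x j)) by (apply frac_lt; nra).
          lra. }
        assert (H0n : (0 < n)%nat) by lia.
        set (z := x 0%nat).
        assert (Hall : forall i, (i < n)%nat -> x i = z).
        { intros i Hi. destruct (Rtotal_order (x i) z) as [L|[L|L]]; auto; exfalso.
          - exact (Hnolt i 0%nat Hi H0n L).
          - exact (Hnolt 0%nat i H0n Hi L). }
        assert (HS := sumR_const n x z Hall).
        pose proof (eq_foc n gamma V0 rho theta t vt alpha h h' x 0 Hgamma HV Halpha_pos Hderiv Hrange Hrho0 Hnr Hrisk ltac:(lra) Heq H0n) as F.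
        cbv zeta in F. fold r in F. fold z in F. rewrite HS in F.
        replace (1 - rho * (INR n * z)) with (1 - INR n * rho * z) in F by ring.
        change (0 < 1 - vt - r * z /\ (z < 1 -> Ds z <= 0) /\ (0 < z -> 0 <= Ds z)) in F.
        destruct F as [E1 [E2 E3]].
        assert (Hz := Hx 0%nat H0n). fold z in Hz.
        assert (Hzm : z = M).
        { destruct (Req_dec z 0) as [Z0|Z0].
          - exfalso. rewrite Z0 in E2. assert (X := E2 ltac:(lra)). lra.
          - destruct (Req_dec z 1) as [Z1|Z1].
            + exfalso. rewrite Z1 in E3, E1. assert (X := E3 ltac:(lra)).
              assert (Y := HD1 ltac:(lra)). lra.
            + assert (X := E2 ltac:(lra)). assert (Y := E3 ltac:(lra)).
              apply (Huniq z M); lra. }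
        intros i Hi. rewrite Hall; auto.
      * intros Hall.
        apply (eq_suff n gamma V0 rho theta t vt alpha h h' x M); auto; try lra.
        all: fold r.
        all: replace (1 - rho * (INR n * M)) with (1 - INR n * rho * M) by ring.
        all: change (h' M / (gamma * h M) - rho / (1 - INR n * rho * M) - r / (1 - vt - r * M)) with (Ds M).
        all: intros; lra.
Qed.
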